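(* Let $S$ be an additively reduced and additively Furstenberg semidomain and let $G$ be a finitely generated torsion-free abelian group (with a total order compatible with addition). The following statements are equivalent. (1) $\mathscr{A}_+(S)=S^\times$. (2) Every $f\in S[\![G]\!]$ with $|\operatorname{supp}(f)|>1$ can be expressed as the sum of at most three irreducible elements of $S[\![G]\!]$. (3) There exists $n\in\mathbb{N}$ with $n>2$ such that every $f\in S[\![G]\!]$ with $|\operatorname{supp}(f)|>1$ can be expressed as the sum of at most $n$ irreducible elements of $S[\![G]\!]$.
   Context: A semidomain is a subsemiring (containing $0$ and $1$) of an integral domain; all semirings are commutative. For a semidomain $S$, $S^\times$ denotes the group of units of the multiplicative monoid $S\setminus\{0\}$. $S$ is additively reduced if $0$ is the only invertible element of $(S,+)$. An additive atom of $S$ is a nonzero $a\in S$ such that $a=b+c$ with $b,c\in S$ implies $b=0$ or $c=0$; $\mathscr{A}_+(S)$ is the set of additive atoms. $S$ is additively Furstenberg if every nonzero $s\in S$ can be written $s=a+t$ with $a\in\mathscr{A}_+(S)$, $t\in S$. For a torsion-free abelian group $G$ with a fixed total order compatible with addition, the group series semidomain is $S[\![G]\!]=\{\sum_{i=0}^\infty s_ix^{g_i} : s_i\in S,\ g_i\in G,\ g_i<g_{i+1}\text{ for all } i\}$, with addition and multiplication defined as for polynomials; elements are written with the convention that $s_i=0$ implies $s_{i+1}=0$. The support of $f=\sum s_ix^{g_i}$ is $\operatorname{supp}(f)=\{g_i : s_i\neq0\}$. An element $f$ is irreducible if it is nonzero, not a unit of $S[\![G]\!]$, and $f=pq$ implies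 one of $p,q$ is a unit. *)

(* Defs.v *)
From mathcomp Require Import all_boot all_order all_algebra.
Set Implicit Arguments. Unset Strict Implicit. Unset Printing Implicit Defensive.
Import Order.TTheory GRing.Theory Num.Theory.
Local Open Scope ring_scope.

Section Semidomain.
Variable R : idomainType.
Variable S : {pred R}.

Definition is_semidomain : Prop :=
  [/\ 0 \in S, 1 \in S,
      (forall a b, a \in S -> b \in S -> a + b \in S) &
      (forall a b, a \in S -> b \in S -> a * b \in S)].

Definition sunit (a : R) : Prop := a \in S /\ exists2 b, b \in S & a * b = 1.

Definition add_reduced : Prop :=
  forall a, a \in S -> (exists2 b, b \in S & a + b = 0) -> a = 0.

Definition add_atom (a : R) : Prop :=
  [/\ a \in S, a != 0 &
      forall b c, b \in S -> c \in S -> a = b + c -> b = 0 \/ c = 0].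

Definition add_furstenberg : Prop :=
  forall s, s \in S -> s != 0 -> exists2 a, add_atom a & exists2 t, t \in S & s = a + t.
End Semidomain.

Section OrderedGroup.
Variable G : zmodType.
Variable lt : rel G.

Definition total_order_compat : Prop :=
  [/\ (forall x, ~~ lt x x),
      (forall x y z, lt x y -> lt y z -> lt x z),
      (forall x y, x != y -> lt x y || lt y x) &
      (forall x y z, lt x y -> lt (x + z) (y + z))].

Definition torsion_free : Prop := forall (g : G) (n : nat), (0 < n)%N -> g *+ n = 0 -> g = 0.

Definition fin_gen : Prop :=
  exists gens : seq G, forall g : G,
    exists c : 'I_(size gens) -> int, g = \sum_(i < size gens) gens`_i *~ c i.
End OrderedGroup.

(* An element  sum_i s_i x^{g_i}  (g_i strictly increasing) is represented by  *)
(* its coefficient function f : G -> R  (f g = coefficient of x^g).           *)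
Section GroupSeries.
Variables (R : idomainType) (S : {pred R}) (G : zmodType) (lt : rel G).

Definition in_series (f : G -> R) : Prop :=
  (forall g, f g \in S) /\
  exists e : nat -> G, (forall i, lt (e i) (e i.+1)) /\
    (forall g, f g != 0 -> exists i, e i = g).

Definition conv_coef (p q : G -> R) (h : G) (c : R) : Prop :=
  exists s : seq G, [/\ uniq s,
    (forall a, p a != 0 -> q (h - a) != 0 -> a \in s) &
    c = \sum_(a <- s) p a * q (h - a)].

Definition series_mul (p q f : G -> R) : Prop := forall h, conv_coef p q h (f h).

Definition series_one : G -> R := fun g => if g == 0 then 1 else 0.

Definition series_nonzero (f : G -> R) : Prop := exists g, f g != 0.

Definition series_unit (u : G -> R) : Prop :=
  in_series u /\ exists v, in_series v /\ series_mul u v series_one.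

Definition series_irred (f : G -> R) : Prop :=
  [/\ in_series f, series_nonzero f, ~ series_unit f &
      forall p q, in_series p -> in_series q -> series_mul p q f ->
        series_unit p \/ series_unit q].

Definition supp_gt1 (f : G -> R) : Prop := exists a b, [/\ a != b, f a != 0 & f b != 0].

Definition sum_of_irred_le (n : nat) (f : G -> R) : Prop :=
  exists l : seq (G -> R), [/\ (size l <= n)%N,
    (forall i, (i < size l)%N -> series_irred (nth (fun _ => 0) l i)) &
    forall g, f g = \sum_(p <- l) p g].
End GroupSeries.

(* Main.v *)
Require Import Defs.
From mathcomp Require Import all_boot all_order all_algebra.
From Stdlib Require Import Classical ClassicalEpsilon.
Set Implicit Arguments. Unset Strict Implicit. Unset Printing Implicit Defensive.
Import Order.TTheory GRing.Theory Num.Theory.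
Local Open Scope ring_scope.

Section Ord.
Variables (G : zmodType) (lt : rel G).
Hypothesis Hord : total_order_compat lt.

Definition gle (x y : G) := (x == y) || lt x y.

Lemma ltxx x : ~~ lt x x. Proof. by case: Hord. Qed.
Lemma lt_trans x y z : lt x y -> lt y z -> lt x z.
Proof. by case: Hord => _ H _ _; apply: H. Qed.
Lemma lt_total x y : x != y -> lt x y || lt y x.
Proof. by case: Hord => _ _ H _; apply: H. Qed.
Lemma ltD2r x y z : lt x y -> lt (x + z) (y + z).
Proof. by case: Hord => _ _ _ H; apply: H. Qed.
Lemma ltD2l z x y : lt x y -> lt (z + x) (z + y).
Proof. by move=> h; rewrite ![z + _]addrC; apply: ltD2r. Qed.
Lemma lt_neq x y : lt x y -> x != y.
Proof. by move=> h; apply/eqP => e; move: h; rewrite e (negbTE (ltxx y)). Qed.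
Lemma lt_asym x y : lt x y -> ~~ lt y x.
Proof. by move=> h; apply/negP => h'; move: (lt_trans h h'); rewrite (negbTE (ltxx x)). Qed.
Lemma le_or_lt x y : gle x y \/ lt y x.
Proof.
case: (eqVneq x y) => [->|ne]; first by left; rewrite /gle eqxx.
by case/orP: (lt_total ne) => h; [left; rewrite /gle h orbT | right].
Qed.
Lemma lexx x : gle x x. Proof. by rewrite /gle eqxx. Qed.
Lemma ltW x y : lt x y -> gle x y. Proof. by move=> h; rewrite /gle h orbT. Qed.
Lemma le_lt_trans x y z : gle x y -> lt y z -> lt x z.
Proof. by case/orP => [/eqP ->//|h]; apply: lt_trans. Qed.
Lemma lt_le_trans x y z : lt x y -> gle y z -> lt x z.
Proof. by move=> h; case/orP => [/eqP <-//|h']; apply: lt_trans h h'. Qed.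
Lemma le_trans x y z : gle x y -> gle y z -> gle x z.
Proof. by case/orP => [/eqP ->//|h] h'; apply: ltW; apply: lt_le_trans h h'. Qed.
Lemma le_antisym x y : gle x y -> gle y x -> x = y.
Proof.
case/orP => [/eqP//|h]; case/orP => [/eqP//|h'].
by move: (lt_trans h h'); rewrite (negbTE (ltxx x)).
Qed.
Lemma lt_leN x y : lt x y -> ~ gle y x.
Proof. by move=> h h'; move: (le_lt_trans h' h); rewrite (negbTE (ltxx y)). Qed.
Lemma leD2r x y z : gle x y -> gle (x + z) (y + z).
Proof. by case/orP => [/eqP ->|h]; [apply: lexx | apply: ltW; apply: ltD2r]. Qed.
Lemma leD2l z x y : gle x y -> gle (z + x) (z + y).
Proof. by move=> h; rewrite ![z + _]addrC; apply: leD2r. Qed.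
Lemma leD a b c d : gle a b -> gle c d -> gle (a + c) (b + d).
Proof. by move=> h1 h2; apply: le_trans (leD2r c h1) (leD2l b h2). Qed.
Lemma ltD_le a b c d : lt a b -> gle c d -> lt (a + c) (b + d).
Proof. by move=> h1 h2; apply: lt_le_trans (ltD2r c h1) (leD2l b h2). Qed.
Lemma le_ltD a b c d : gle a b -> lt c d -> lt (a + c) (b + d).
Proof. by move=> h1 h2; apply: le_lt_trans (leD2r c h1) (ltD2l b h2). Qed.
Lemma subr_gt0' m e : lt m e -> lt 0 (e - m).
Proof. by move=> h; move: (ltD2r (- m) h); rewrite subrr. Qed.
Lemma lt_addr x d : lt 0 d -> lt x (x + d).
Proof. by move=> h; move: (ltD2l x h); rewrite addr0. Qed.
Lemma lt_subr x d : lt 0 d -> lt (x - d) x.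
Proof. by move=> h; move: (ltD2l (x - d) h); rewrite addr0 subrK. Qed.

Lemma mono_lt (e : nat -> G) : (forall i, lt (e i) (e i.+1)) ->
  forall i j, (i < j)%N -> lt (e i) (e j).
Proof.
move=> he i j; elim: j => // j IH; rewrite ltnS leq_eqVlt => /orP[/eqP ->//|h].
by apply: lt_trans (IH h) (he j).
Qed.
Lemma mono_le (e : nat -> G) : (forall i, lt (e i) (e i.+1)) ->
  forall i j, (i <= j)%N -> gle (e i) (e j).
Proof.
move=> he i j; rewrite leq_eqVlt => /orP[/eqP ->|h]; first exact: lexx.
by apply: ltW; apply: mono_lt.
Qed.
Lemma mono_lt_inv (e : nat -> G) : (forall i, lt (e i) (e i.+1)) ->
  forall i j, lt (e i) (e j) -> (i < j)%N.
Proof.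
move=> he i j h; rewrite ltnNge; apply/negP => hji.
by apply: (lt_leN h); apply: mono_le.
Qed.
Lemma pos_exists : (exists g : G, g != 0) -> exists d, lt 0 d.
Proof.
case=> g /lt_total /orP[h|h]; first by exists (- g); move: (ltD2r (- g) h); rewrite subrr add0r.
by exists g.
Qed.
Lemma muln_lt (d : G) : lt 0 d -> forall i, lt (d *+ i) (d *+ i.+1).
Proof. by move=> hd i; rewrite mulrS addrC; apply: lt_addr. Qed.
Lemma shift_lt (a d : G) : lt 0 d -> forall i, lt (a + d *+ i) (a + d *+ i.+1).
Proof. by move=> hd i; apply: ltD2l; apply: muln_lt. Qed.
End Ord.

Lemma alg1 (G : zmodType) (a b c : G) : (a + b) - (a + c) = b - c.
Proof. by rewrite opprD addrACA subrr add0r. Qed.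
Lemma alg2 (G : zmodType) (a b c : G) : a + b + (c - b) = a + c.
Proof. by rewrite -addrA [b + _]addrC subrK. Qed.
Lemma alg3 (G : zmodType) (x z : G) : x + (z - x) = z.
Proof. by rewrite addrC subrK. Qed.
Lemma alg5 (G : zmodType) (a b : G) : a + b - a = b.
Proof. by rewrite [a + b]addrC addrK. Qed.
Lemma alg1' (G : zmodType) (a b c : G) : (a + b) - (c + b) = a - c.
Proof. by rewrite opprD addrACA subrr addr0. Qed.
Lemma alg2' (G : zmodType) (a b c : G) : a + b + (c - a) = c + b.
Proof. by rewrite addrAC alg3. Qed.
Lemma alg4 (G : zmodType) (z b : G) : z - (z - b) = b.
Proof. by rewrite opprB addrC subrK. Qed.

Lemma least_nat (Q : nat -> Prop) : (exists i, Q i) -> exists i, Q i /\ forall j, (j < i)%N -> ~ Q j.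
Proof.
case=> i Hi; elim: i {-2}i (leqnn i) Hi => [|n IH] i.
  rewrite leqn0 => /eqP -> H0; by exists 0%N; split.
move=> hi Qi; case: (classic (exists j, (j < i)%N /\ Q j)) => [[j [hj Qj]]|N].
  apply: (IH j) => //; by rewrite -ltnS (leq_trans hj hi).
by exists i; split => // j hj Qj; apply: N; exists j.
Qed.

Lemma choice_fun (A B : Type) (P : A -> B -> Prop) :
  (forall a, exists b, P a b) -> exists f, forall a, P a (f a).
Proof.
move=> H; exists (fun a => proj1_sig (constructive_indefinite_description _ (H a))).
by move=> a; case: (constructive_indefinite_description _ (H a)).
Qed.

Section Series.
Variables (R : idomainType) (S : {pred R}) (G : zmodType) (lt : rel G).
Hypothesis HS : is_semidomain S.
Hypothesis Hred : add_reduced S.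
Hypothesis Hord : total_order_compat lt.

Lemma S0 : 0 \in S. Proof. by case: HS. Qed.
Lemma S1 : 1 \in S. Proof. by case: HS. Qed.
Lemma SD a b : a \in S -> b \in S -> a + b \in S. Proof. by case: HS => _ _ H _; apply: H. Qed.
Lemma SM a b : a \in S -> b \in S -> a * b \in S. Proof. by case: HS => _ _ _ H; apply: H. Qed.

Lemma sum_S (I : Type) (r : seq I) (P : pred I) (F : I -> R) :
  (forall i, F i \in S) -> \sum_(i <- r | P i) F i \in S.
Proof.
move=> HF; elim: r => [|x r IH]; first by rewrite big_nil S0.
by rewrite big_cons; case: (P x) => //; apply: SD.
Qed.

Lemma red2 a b : a \in S -> b \in S -> a + b = 0 -> a = 0 /\ b = 0.
Proof.
move=> ha hb e; have a0 : a = 0 by apply: Hred => //; exists b.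
by split => //; move: e; rewrite a0 add0r.
Qed.

Lemma sum_eq0_S (I : eqType) (r : seq I) (P : pred I) (F : I -> R) :
  (forall i, F i \in S) -> \sum_(i <- r | P i) F i = 0 ->
  forall i, i \in r -> P i -> F i = 0.
Proof.
move=> HF; elim: r => [|x r IH] //; rewrite big_cons => H i.
have hr : \sum_(j <- r | P j) F j \in S by apply: sum_S.
rewrite in_cons => /orP[/eqP ->|hi] Pi.
  by move: H; rewrite Pi => /(red2 (HF x) hr) [].
apply: IH => //; case: (P x) H => // /(red2 (HF x) hr) [] //.
Qed.

Lemma sum_neq0_S (I : eqType) (r : seq I) (P : pred I) (F : I -> R) j :
  (forall i, F i \in S) -> j \in r -> P j -> F j != 0 -> \sum_(i <- r | P i) F i != 0.
Proof.
move=> HF jr Pj Fj; apply/eqP => H; move/eqP: Fj; apply.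
exact: sum_eq0_S H j jr Pj.
Qed.

Lemma sum_nz_exists (I : eqType) (r : seq I) (F : I -> R) :
  \sum_(i <- r) F i != 0 -> exists i, i \in r /\ F i != 0.
Proof.
move=> H; apply: NNPP => N; move/eqP: H; apply; apply: big1_seq => i /andP[_ hi].
by apply/eqP; apply: negbNE; apply/negP => hF; apply: N; exists i.
Qed.

Lemma sum_single (I : eqType) (r : seq I) (F : I -> R) j :
  uniq r -> (forall i, i \in r -> i != j -> F i = 0) -> (F j != 0 -> j \in r) ->
  \sum_(i <- r) F i = F j.
Proof.
move=> u H1 H2; case: (boolP (j \in r)) => jr.
  rewrite (bigD1_seq j) //= big1_seq ?addr0 // => i /andP[hij hi]; exact: H1.
have Fj : F j = 0 by apply/eqP; apply: negbNE; apply/negP => /H2; rewrite (negbTE jr).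
rewrite Fj big1_seq // => i /andP[_ hi]; apply: H1 => //.
by apply/eqP => e; move: hi; rewrite e (negbTE jr).
Qed.

Lemma in_series_S (f : G -> R) : in_series S lt f -> forall g, f g \in S.
Proof. by case=> H _. Qed.

Lemma in_series_sub (f h : G -> R) : in_series S lt f -> (forall g, h g \in S) ->
  (forall g, h g != 0 -> f g != 0) -> in_series S lt h.
Proof.
move=> [_ [e [he hs]]] hS hsub; split => //; exists e; split => // g /hsub; exact: hs.
Qed.

Lemma min_supp (f : G -> R) (P : G -> Prop) : in_series S lt f -> (exists x, P x /\ f x != 0) ->
  exists m, [/\ P m, f m != 0 & forall y, P y -> f y != 0 -> gle lt m y].
Proof.
move=> [_ [e [he hs]]] [x [Px fx]].
have [i [[Pi fi] imin]] : exists i, (P (e i) /\ f (e i) != 0) /\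
    forall j, (j < i)%N -> ~ (P (e j) /\ f (e j) != 0).
  apply: least_nat; have [i ei] := hs x fx; by exists i; rewrite ei.
exists (e i); split => // y Py fy; have [j ej] := hs y fy; rewrite -ej.
apply: mono_le => //; rewrite leqNgt; apply/negP => hji; apply: (imin j hji).
by rewrite ej.
Qed.

Lemma prod_nz (p q h : G -> R) x y : in_series S lt p -> in_series S lt q -> series_mul p q h ->
  p x != 0 -> q y != 0 -> h (x + y) != 0.
Proof.
move=> hp hq hm px qy; have [s [us hs ->]] := hm (x + y).
apply: (@sum_neq0_S _ _ _ _ x).
- by move=> a; apply: SM; apply: in_series_S.
- by apply: hs => //; rewrite alg5.
- by [].
- by rewrite alg5 mulf_neq0.
Qed.

Lemma prod_supp (p q h : G -> R) z : series_mul p q h -> h z != 0 ->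
  exists x, p x != 0 /\ q (z - x) != 0.
Proof.
move=> hm; have [s [us hs ->]] := hm z => /sum_nz_exists [a [_ ha]].
by exists a; move: ha; rewrite mulf_eq0 negb_or => /andP.
Qed.

Lemma one_supp (x : G) : (series_one R x) != 0 -> x = 0.
Proof. by rewrite /series_one; case: (eqVneq x 0) => // _; rewrite eqxx. Qed.

Lemma unit_single (u : G -> R) x y : in_series S lt u -> series_unit S lt u -> u x != 0 -> u y != 0 -> x = y.
Proof.
move=> hu [_ [v [hv hm]]] ux uy.
have [x0 [_ vx0]] : exists x0, u x0 != 0 /\ v (0 - x0) != 0.
  by apply: prod_supp hm _; rewrite /series_one eqxx oner_neq0.
have h1 := one_supp (prod_nz hu hv hm ux vx0).
have h2 := one_supp (prod_nz hu hv hm uy vx0).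
by apply: (addIr (0 - x0)); rewrite h1 h2.
Qed.

Lemma sunit_mulL x y : x \in S -> y \in S -> sunit S (x * y) -> sunit S x.
Proof.
move=> hx hy [_ [w hw e]]; split => //; exists (y * w); first exact: SM.
by rewrite mulrA.
Qed.

Lemma sunit_neq0 x : sunit S x -> x != 0.
Proof. by case=> _ [w _ e]; apply/eqP => x0; move: e; rewrite x0 mul0r => /eqP; rewrite eq_sym oner_eq0. Qed.

Lemma mono_unit (p : G -> R) a0 d : lt 0 d -> in_series S lt p -> sunit S (p a0) ->
  (forall x, p x != 0 -> x = a0) -> series_unit S lt p.
Proof.
move=> hd hp [_ [w hw e]] hsing; split => //.
exists (fun x => if x == - a0 then w else 0); split.
  split; first by move=> g; case: (_ == _) => //; exact: S0.
  exists (fun i => - a0 + d *+ i); split; first exact: shift_lt.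
  by move=> g; case: (eqVneq g (- a0)) => [->|_]; [exists 0%N; rewrite mulr0n addr0|rewrite eqxx].
move=> z; exists [:: a0]; split => //.
  by move=> a pa _; rewrite inE (hsing a pa).
rewrite big_seq1 /series_one; case: (eqVneq z 0) => [->|nz].
  by rewrite add0r eqxx e.
rewrite ifF ?mulr0 //; apply/eqP => e'; move/eqP: nz; apply.
by move: e'; rewrite -[X in _ = X]add0r => /addIr.
Qed.
End Series.

Section Crit.
Variables (R : idomainType) (S : {pred R}) (G : zmodType) (lt : rel G).
Hypothesis HS : is_semidomain S.
Hypothesis Hred : add_reduced S.
Hypothesis Hord : total_order_compat lt.

Lemma sum_two_not_atom (s : seq G) (F : G -> R) a0 a1 :
  uniq s -> a0 \in s -> a1 \in s -> a0 != a1 -> (forall i, F i \in S) ->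
  F a0 != 0 -> F a1 != 0 -> ~ add_atom S (\sum_(i <- s) F i).
Proof.
move=> us h0 h1 ne HF F0 F1 [_ _ Hat].
rewrite (bigD1_seq a0) //= in Hat.
have hr : \sum_(i <- s | i != a0) F i \in S by apply: sum_S.
have := Hat (F a0) (\sum_(i <- s | i != a0) F i) (HF a0) hr erefl.
case=> [/eqP|/eqP]; first by rewrite (negbTE F0).
by apply/negP; apply: (@sum_neq0_S _ _ HS Hred _ _ _ _ a1) => //; rewrite eq_sym.
Qed.

Lemma irr_crit (h : G -> R) m e d :
  lt 0 d -> in_series S lt h -> h m != 0 -> h e != 0 -> lt m e ->
  (forall x, h x != 0 -> x = m \/ gle lt e x) ->
  (exists z, sunit S (h z)) ->
  (forall x, h x != 0 -> x != m -> h (x + (e - m)) != 0 -> x = e /\ add_atom S (h e)) ->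
  series_irred S lt h.
Proof.
move=> hd hh hm he hme hsup [z hz] hdel.
have hS := in_series_S hh.
split => //; first by exists m.
  move=> hu; have := unit_single HS Hred hh hu hm he => eme.
  by move: (lt_neq Hord hme); rewrite eme eqxx.
move=> p q hp hq hpq.
have pS := in_series_S hp; have qS := in_series_S hq.
have [x0 [px0 qx0]] := prod_supp hpq hm.
have [a0 [_ pa0 a0min]] := min_supp Hord (P := fun _ => True) hp (ex_intro _ x0 (conj I px0)).
have [b0 [_ qb0 b0min]] := min_supp Hord (P := fun _ => True) hq (ex_intro _ _ (conj I qx0)).
have hz0 := sunit_neq0 hz.
have [s [us hs hzs]] := hpq z.
case: (classic (exists x, x != a0 /\ p x != 0)) => [[xa [xa0 pxa]]|Np]; last first.
  have sing : forall x, p x != 0 -> x = a0.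
    by move=> x px; apply: NNPP => nx; apply: Np; exists x; split => //; apply/eqP.
  left; apply: (@mono_unit _ _ _ _ HS Hord p a0 d hd hp) => //.
  apply: (@sunit_mulL _ _ HS _ (q (z - a0))) => //.
  have <- // : h z = p a0 * q (z - a0).
  rewrite hzs; apply: (@sum_single _ _ s (fun x => p x * q (z - x)) a0 us).
    move=> i _ ia; case: (eqVneq (p i) 0) => [->|/sing iE]; first by rewrite mul0r.
    by rewrite iE eqxx in ia.
  by rewrite mulf_eq0 negb_or => /andP [h1 h2]; apply: hs.
case: (classic (exists x, x != b0 /\ q x != 0)) => [[xb [xb0 qxb]]|Nq]; last first.
  have sing : forall x, q x != 0 -> x = b0.
    by move=> x qx; apply: NNPP => nx; apply: Nq; exists x; split => //; apply/eqP.
  right; apply: (@mono_unit _ _ _ _ HS Hord q b0 d hd hq) => //.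
  apply: (@sunit_mulL _ _ HS _ (p (z - b0))) => //; rewrite mulrC.
  have -> : p (z - b0) * q b0 = p (z - b0) * q (z - (z - b0)) by rewrite alg4.
  have <- // : h z = p (z - b0) * q (z - (z - b0)).
  rewrite hzs; apply: (@sum_single _ _ s (fun x => p x * q (z - x)) (z - b0) us).
    move=> i _ ia; case: (eqVneq (q (z - i)) 0) => [->|/sing iE]; first by rewrite mulr0.
    by rewrite -iE alg4 eqxx in ia.
  by rewrite mulf_eq0 negb_or => /andP [h1 h2]; apply: hs.
have [a1 [a1a0 pa1 a1min]] := min_supp Hord (P := fun x => x != a0) hp (ex_intro _ xa (conj xa0 pxa)).
have [b1 [b1b0 qb1 b1min]] := min_supp Hord (P := fun x => x != b0) hq (ex_intro _ xb (conj xb0 qxb)).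
have lta : lt a0 a1.
  by case/orP: (a0min a1 I pa1) => [/eqP e0|//]; move: a1a0; rewrite e0 eqxx.
have ltb : lt b0 b1.
  by case/orP: (b0min b1 I qb1) => [/eqP e0|//]; move: b1b0; rewrite e0 eqxx.
have hsupp : forall w, h w != 0 -> gle lt (a0 + b0) w.
  move=> w /(prod_supp hpq) [x [px qx]]; rewrite -(alg3 x w).
  exact: (leD Hord (a0min x I px) (b0min _ I qx)).
have hm0 : a0 + b0 = m.
  have h0 := prod_nz HS Hred hp hq hpq pa0 qb0.
  case: (hsup _ h0) => // /(le_trans Hord) /(_ (hsupp m hm)) hem.
  by case: (lt_leN Hord hme hem).
have hX := prod_nz HS Hred hp hq hpq pa1 qb0.
have hY := prod_nz HS Hred hp hq hpq pa0 qb1.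
have hXY := prod_nz HS Hred hp hq hpq pa1 qb1.
have mX : lt m (a1 + b0) by rewrite -hm0; exact: (ltD_le Hord lta (lexx lt b0)).
have mY : lt m (a0 + b1) by rewrite -hm0; exact: (le_ltD Hord (lexx lt a0) ltb).
have eX : gle lt e (a1 + b0).
  by case: (hsup _ hX) => // eq; move: (lt_neq Hord mX); rewrite eq eqxx.
have eY : gle lt e (a0 + b1).
  by case: (hsup _ hY) => // eq; move: (lt_neq Hord mY); rewrite eq eqxx.
have [E|E] : e = a0 + b1 \/ e = a1 + b0.
  have [x [px qx]] := prod_supp hpq he.
  case: (eqVneq x a0) => [xa_|xa_].
    left; apply: (le_antisym Hord eY); rewrite -(alg3 x e) xa_.
    apply: (leD2l Hord); apply: b1min; last by rewrite -xa_.
    apply/eqP => eb.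
    by move: (lt_neq Hord hme); rewrite -hm0 -eb -xa_ alg3 eqxx.
  right; apply: (le_antisym Hord eX); rewrite -(alg3 x e).
  by apply: (leD Hord); [apply: a1min | apply: b0min].
- have := hdel (a1 + b0) hX (ltac:(by rewrite eq_sym (lt_neq Hord mX))) ; rewrite E -hm0 alg1 alg2 => /(_ hXY) [EX Hat].
  have [s' [us' hs' he']] := hpq e.
  exfalso; apply: (sum_two_not_atom (s:=s') (F:=fun x => p x * q (e - x)) (a0:=a0) (a1:=a1)) => //.
  + by apply: hs' => //; rewrite E alg5.
  + by apply: hs' => //; rewrite E -EX alg5.
  + exact: (lt_neq Hord lta).
  + by move=> i; apply: SM.
  + by rewrite E alg5 mulf_neq0.
  + by rewrite E -EX alg5 mulf_neq0.
  + by rewrite -he' E.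
- have := hdel (a0 + b1) hY (ltac:(by rewrite eq_sym (lt_neq Hord mY))) ; rewrite E -hm0.
  rewrite alg1' alg2' => /(_ hXY) [EY Hat].
  have [s' [us' hs' he']] := hpq e.
  exfalso; apply: (sum_two_not_atom (s:=s') (F:=fun x => p x * q (e - x)) (a0:=a0) (a1:=a1)) => //.
  + by apply: hs' => //; rewrite E -EY alg5.
  + by apply: hs' => //; rewrite E alg5.
  + exact: (lt_neq Hord lta).
  + by move=> i; apply: SM.
  + by rewrite E -EY alg5 mulf_neq0.
  + by rewrite E alg5 mulf_neq0.
  + by rewrite -he' E.
Qed.
End Crit.

Lemma algS (G : zmodType) (x d : G) k : x - d *+ k.+1 = (x - d) - d *+ k.
Proof. by rewrite mulrS opprD addrA. Qed.

Lemma coloring (G : zmodType) (lt : rel G) (Hord : total_order_compat lt)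
  (W : pred G) (dl : G) (e : nat -> G) :
  lt 0 dl -> (forall i, lt (e i) (e i.+1)) -> (forall y, W y -> exists i, e i = y) ->
  exists col : G -> bool, forall x,
    (W (x - dl) -> col x = ~~ col (x - dl)) /\ (~~ W (x - dl) -> col x = true).
Proof.
move=> hd he hW.
pose spec x n := (forall k, (0 < k <= n)%N -> W (x - dl *+ k)) /\ ~~ W (x - dl *+ n.+1).
have ex : forall x, exists n, spec x n.
  move=> x.
  have nall : ~ (forall n, forall k, (0 < k <= n)%N -> W (x - dl *+ k)).
    move=> all.
    have [i0 ei0] := hW _ (all 1%N 1%N erefl).
    have cl : forall k, exists i, e i = x - dl *+ k.+1 /\ (i + k <= i0)%N.
      elim=> [|k [i [ei ik]]]; first by exists i0; rewrite addn0.
      have [j ej] := hW _ (all k.+2 k.+2 (leqnn _)).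
      have ji : (j < i)%N.
        apply: (mono_lt_inv Hord he); rewrite ej ei.
        have -> : x - dl *+ k.+2 = (x - dl *+ k.+1) - dl by rewrite mulrSr opprD addrA.
        exact: (lt_subr Hord).
      exists j; split => //; rewrite addnS; apply: leq_trans ik.
      by rewrite ltn_add2r.
    have [i [_ ik]] := cl i0.+1.
    by move: ik; rewrite addnS ltnNge leq_addl.
  have [n0 [Qn0 n0min]] := least_nat (Q := fun n => ~ forall k, (0 < k <= n)%N -> W (x - dl *+ k))
    (not_all_ex_not _ _ nall).
  case: n0 Qn0 n0min => [|n] Qn nmin.
    by case: Qn => k /andP[k0 kn]; move: (leq_trans k0 kn).
  have alln : forall k, (0 < k <= n)%N -> W (x - dl *+ k).
    by apply: NNPP => /(nmin n (ltnSn n)).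
  exists n; split => //; apply/negP => Wn; apply: Qn => k /andP[k0].
  rewrite leq_eqVlt => /orP[/eqP -> //|kn]; apply: alln; rewrite k0 /=; by rewrite -ltnS.
have uniq_spec : forall x n m, spec x n -> spec x m -> n = m.
  move=> x n m [An Nn] [Am Nm]; apply/eqP; rewrite eqn_leq; apply/andP; split.
    rewrite leqNgt; apply/negP => mn; by move: Nm; rewrite An.
  rewrite leqNgt; apply/negP => nm; by move: Nn; rewrite Am.
have [len hlen] := choice_fun ex.
exists (fun x => ~~ odd (len x)) => x; split.
  move=> Wx; have : spec x (len (x - dl)).+1.
    case: (hlen (x - dl)) => A N; split; last by rewrite algS.
    case=> // k /andP[_ kn]; rewrite algS; case: k kn => [|k] kn; first by rewrite mulr0n subr0.
    by apply: A.
  move/(uniq_spec _ _ _ (hlen x)) => ->; by rewrite /= negbK.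
move=> NW; have : spec x 0%N by split => //; case=> // k /andP[_]; rewrite ltn0.
by move/(uniq_spec _ _ _ (hlen x)) => ->.
Qed.

Section SumIrr.
Variables (R : idomainType) (S : {pred R}) (G : zmodType) (lt : rel G).

Lemma soi_one (h : G -> R) : series_irred S lt h -> sum_of_irred_le S lt 1 h.
Proof.
move=> hi; exists [:: h]; split => //; first by case.
by move=> g; rewrite big_seq1.
Qed.

Lemma soi_cons n (q h k : G -> R) : series_irred S lt q -> sum_of_irred_le S lt n h ->
  (forall g, k g = q g + h g) -> sum_of_irred_le S lt n.+1 k.
Proof.
move=> hq [l [sl hl hs]] hk; exists (q :: l); split => //.
  by case=> //= i; rewrite ltnS; apply: hl.
by move=> g; rewrite big_cons hk hs.
Qed.

Lemma soi_mono n m (h : G -> R) : (n <= m)%N -> sum_of_irred_le S lt n h -> sum_of_irred_le S lt m h.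
Proof. by move=> nm [l [sl hl hs]]; exists l; split => //; apply: leq_trans nm. Qed.

Lemma soi_ext n (h k : G -> R) : (forall g, h g = k g) -> sum_of_irred_le S lt n h -> sum_of_irred_le S lt n k.
Proof. by move=> e [l [sl hl hs]]; exists l; split => // g; rewrite -e. Qed.
End SumIrr.

Section Main.
Variables (R : idomainType) (S : {pred R}) (G : zmodType) (lt : rel G).
Hypothesis HS : is_semidomain S.
Hypothesis Hred : add_reduced S.
Hypothesis Hfur : add_furstenberg S.
Hypothesis Hord : total_order_compat lt.
Hypothesis HP1 : forall a : R, a \in S -> (add_atom S a <-> sunit S a).
Variable d : G.
Hypothesis hd : lt 0 d.

Lemma split_val s : s \in S -> s != 0 -> exists u t, [/\ u \in S, t \in S, s = u + t & sunit S u].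
Proof.
move=> sS s0; have [a ha [t tS e]] := Hfur sS s0.
exists a, t; split => //; first by case: ha.
by apply/HP1 => //; case: ha.
Qed.

Lemma split_nonunit s u t : s = u + t -> sunit S u -> ~ sunit S s -> t != 0.
Proof. by move=> -> hu hn; apply/eqP => t0; apply: hn; rewrite t0 addr0. Qed.

Lemma decomp (f : G -> R) : in_series S lt f -> exists uf tf : G -> R, forall x,
  [/\ uf x \in S, tf x \in S, f x = uf x + tf x & f x != 0 -> sunit S (uf x)].
Proof.
move=> hf.
have : forall x, exists p : R * R, [/\ p.1 \in S, p.2 \in S, f x = p.1 + p.2 & f x != 0 -> sunit S p.1].
  move=> x; case: (eqVneq (f x) 0) => [->|nz].
    by exists (0, 0); split => //=; [exact: S0 | exact: S0 | rewrite addr0].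
  have [u [t [uS tS e hu]]] := split_val (in_series_S hf x) nz.
  by exists (u, t).
case/choice_fun => F hF; exists (fun x => (F x).1), (fun x => (F x).2) => x; exact: hF.
Qed.

Section Pieces.
Variables (f : G -> R) (g0 g1 : G) (W : pred G) (col : G -> bool).
Hypothesis hf : in_series S lt f.
Hypothesis hg01 : lt g0 g1.
Hypothesis hsup : forall x, f x != 0 -> x = g0 \/ gle lt g1 x.
Hypothesis hcol : forall x, W (x - (g1 - g0)) -> col x = ~~ col (x - (g1 - g0)).

Lemma col_step x : W x -> col (x + (g1 - g0)) = ~~ col x.
Proof. by move=> Wx; rewrite hcol addrK. Qed.

Lemma pieceII (k : G -> R) : (forall x, W x = (f x != 0) && (x != g0)) ->
  (forall g, k g \in S) -> (forall x, k x != 0 -> f x != 0 /\ (W x -> col x)) ->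
  k g0 != 0 -> k g1 != 0 -> (exists z, sunit S (k z)) -> series_irred S lt k.
Proof.
move=> hW kS hk k0 k1 ku.
apply: (irr_crit HS Hred Hord (m := g0) (e := g1) hd) => //.
- by apply: (in_series_sub hf) => // g /hk [].
- by move=> x /hk [/hsup].
move=> x kx xg0 kxd; exfalso.
have [fx cx] := hk x kx; have [fxd cxd] := hk _ kxd.
have Wx : W x by rewrite hW fx xg0.
have Wxd : W (x + (g1 - g0)).
  rewrite hW fxd /=; case: (hsup fx) => [/eqP|gx]; first by rewrite (negbTE xg0).
  rewrite eq_sym; apply: (lt_neq Hord); apply: (lt_trans Hord hg01); apply: (le_lt_trans Hord gx).
  by apply: (lt_addr Hord); apply: (subr_gt0' Hord).
by move: (cxd Wxd); rewrite col_step // (cx Wx).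
Qed.

Lemma pieceI (k : G -> R) : (forall x, W x = (f x != 0) && lt g1 x) ->
  (forall g, k g \in S) -> (forall x, k x != 0 -> f x != 0 /\ (W x -> col x)) ->
  k g0 != 0 -> k g1 = f g1 -> sunit S (f g1) -> series_irred S lt k.
Proof.
move=> hW kS hk k0 k1 fu.
have f1 := sunit_neq0 fu.
have fS := in_series_S hf.
apply: (irr_crit HS Hred Hord (m := g0) (e := g1) hd) => //.
- by apply: (in_series_sub hf) => // g /hk [].
- by rewrite k1.
- by move=> x /hk [/hsup].
- by exists g1; rewrite k1.
move=> x kx xg0 kxd.
have [fx cx] := hk x kx; have [fxd cxd] := hk _ kxd.
case: (eqVneq x g1) => [->|xg1]; first by split => //; rewrite k1; apply/HP1.
exfalso.
have g1x : lt g1 x.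
  case: (hsup fx) => [/eqP|/orP[/eqP e|//]]; first by rewrite (negbTE xg0).
  by move: xg1; rewrite e eqxx.
have Wx : W x by rewrite hW fx g1x.
have Wxd : W (x + (g1 - g0)).
  rewrite hW fxd /=; apply: (lt_trans Hord g1x).
  by apply: (lt_addr Hord); apply: (subr_gt0' Hord).
by move: (cxd Wxd); rewrite col_step // (cx Wx).
Qed.

Lemma L2 (h : G -> R) : (forall x, W x = (f x != 0) && (x != g0)) ->
  (forall g, h g \in S) -> (forall x, h x != 0 -> f x != 0 /\ (W x -> col x)) ->
  h g0 != 0 -> h g1 != 0 -> sum_of_irred_le S lt 2 h.
Proof.
move=> hW hS hh h0 h1.
case: (classic (exists z, sunit S (h z))) => [hu|nu].
  by apply: (soi_mono (n := 1)) => //; apply: soi_one; apply: pieceII.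
have [u0 [t0 [u0S t0S e0 hu0]]] := split_val (hS g0) h0.
have [u1 [t1 [u1S t1S e1 hu1]]] := split_val (hS g1) h1.
have t0n := split_nonunit e0 hu0 (fun H => nu (ex_intro (fun z => sunit S (h z)) g0 H)).
have t1n := split_nonunit e1 hu1 (fun H => nu (ex_intro (fun z => sunit S (h z)) g1 H)).
have g10 : g1 != g0 by rewrite eq_sym (lt_neq Hord hg01).
pose Rr := fun x => if x == g0 then t0 else if x == g1 then u1 else 0.
pose Pp := fun x => if x == g0 then u0 else if x == g1 then t1 else h x.
apply: (soi_cons (q := Rr) (h := Pp)).
- apply: pieceII => //.
  + by move=> g; rewrite /Rr; case: (_ == _); last case: (_ == _); rewrite // S0.
  + move=> x; rewrite /Rr; case: (eqVneq x g0) => [-> _|_]; first exact: hh.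
    by case: (eqVneq x g1) => [-> _|_ //]; [exact: hh | rewrite eqxx].
  + by rewrite /Rr eqxx.
  + by rewrite /Rr (negbTE g10) eqxx (sunit_neq0 hu1).
  + by exists g1; rewrite /Rr (negbTE g10) eqxx.
- apply: soi_one; apply: pieceII => //.
  + by move=> g; rewrite /Pp; case: (_ == _); last case: (_ == _).
  + move=> x; rewrite /Pp; case: (eqVneq x g0) => [-> _|_]; first exact: hh.
    by case: (eqVneq x g1) => [-> _|_]; [exact: hh | exact: hh].
  + by rewrite /Pp eqxx (sunit_neq0 hu0).
  + by rewrite /Pp (negbTE g10) eqxx.
  + by exists g0; rewrite /Pp eqxx.
- move=> x; rewrite /Rr /Pp; case: (eqVneq x g0) => [->|_]; first by rewrite e0 addrC.
  by case: (eqVneq x g1) => [->|_]; [rewrite e1 | rewrite add0r].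
Qed.
End Pieces.

Lemma pieceQ (f : G -> R) (W : pred G) (col : G -> bool) (dl b0 : G) (u : R) :
  in_series S lt f -> lt 0 dl -> (forall x, W x -> f x != 0) ->
  (forall x, W (x - dl) -> col x = ~~ col (x - dl)) ->
  W (b0 - dl) -> W b0 -> ~~ col b0 ->
  (forall y, W y && ~~ col y -> f y != 0 -> gle lt b0 y) ->
  u \in S -> sunit S u ->
  series_irred S lt (fun x => if x == b0 - dl then u else if W x && ~~ col x then f x else 0).
Proof.
move=> hf hdl hWf hcol Wc Wb0 cb0 b0min uS hu.
have cb : lt (b0 - dl) b0 by apply: (lt_subr Hord).
have b0c : b0 != b0 - dl by rewrite eq_sym (lt_neq Hord cb).
apply: (irr_crit HS Hred Hord (m := b0 - dl) (e := b0) hd) => //.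
- apply: (in_series_sub hf).
    by move=> g; case: (_ == _) => //; case: (_ && _); rewrite ?S0 ?(in_series_S hf).
  move=> g; case: (eqVneq g (b0 - dl)) => [-> _|_]; first exact: hWf.
  by case/boolP: (W g && ~~ col g) => [/andP[Wg _] _|_]; [exact: hWf | rewrite eqxx].
- by rewrite eqxx (sunit_neq0 hu).
- by rewrite (negbTE b0c) Wb0 cb0 hWf.
- move=> x; case: (eqVneq x (b0 - dl)) => [->|_]; first by left.
  case/boolP: (W x && ~~ col x) => [hB fx|_]; last by rewrite eqxx.
  by right; apply: b0min.
- by exists (b0 - dl); rewrite eqxx.
rewrite alg4 => x Qx xc; move: Qx; rewrite (negbTE xc).
case/boolP: (W x && ~~ col x) => [/andP[Wx cx] fx|_]; last by rewrite eqxx.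
have gx := b0min x (introT andP (conj Wx cx)) fx.
have xx : lt x (x + dl) by apply: (lt_addr Hord).
case: (eqVneq (x + dl) (b0 - dl)) => [E|_].
  exfalso; have h1 := le_lt_trans Hord gx xx; rewrite E in h1.
  by move: (lt_trans Hord h1 cb); rewrite (negbTE (ltxx Hord b0)).
case/boolP: (W (x + dl) && ~~ col (x + dl)) => [/andP[Wxd cxd] _|_]; last by rewrite eqxx.
by exfalso; move: cxd; rewrite hcol addrK ?Wx // cx.
Qed.

Lemma main_P2 (f : G -> R) : in_series S lt f -> supp_gt1 f -> sum_of_irred_le S lt 3 f.
Proof.
move=> hf [a [b [ab fa fb]]].
have fS := in_series_S hf.
have [g0 [_ f0 g0min]] := min_supp Hord (P := fun _ => True) hf (ex_intro _ a (conj I fa)).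
have ex1 : exists x, x != g0 /\ f x != 0.
  case: (eqVneq a g0) => [ea|na]; last by exists a.
  by exists b; split => //; rewrite -ea eq_sym.
have [g1 [g10 f1 g1min]] := min_supp Hord (P := fun x => x != g0) hf ex1.
have hg01 : lt g0 g1.
  by case/orP: (g0min g1 I f1) => [/eqP e0|//]; move: g10; rewrite e0 eqxx.
have hsup : forall x, f x != 0 -> x = g0 \/ gle lt g1 x.
  move=> x fx; case: (eqVneq x g0) => [->|nx]; [by left | right; exact: g1min].
pose dl := g1 - g0.
have hdl : lt 0 dl by apply: (subr_gt0' Hord).
have [uf [tf hut]] := decomp hf.
have [_ [e [he hse]]] := hf.
have g0g1 : g0 != g1 by rewrite (lt_neq Hord hg01).
case: (classic (sunit S (f g1))) => H1.
-
  pose W := fun x => (f x != 0) && lt g1 x.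
  have [col hcol] := @coloring G lt Hord W dl e hdl he (fun y Wy => hse y (proj1 (andP Wy))).
  have hcol1 : forall x, W (x - dl) -> col x = ~~ col (x - dl) := fun x => (hcol x).1.
  have WS : forall x, W x -> f x != 0 by move=> x /andP[].
  case: (classic (exists b, W b && ~~ col b)) => [[bb hb]|nB]; last first.
    apply: (soi_mono (n := 1)) => //; apply: soi_one.
    apply: (pieceI (W := W) (col := col) hf hg01 hsup hcol1) => //.
    move=> x fx; split => // Wx; apply: negbNE; apply/negP => cx; apply: nB.
    by exists x; rewrite Wx cx.
  have [b0 [hb0 fb0 b0min]] := min_supp Hord (P := fun x => W x && ~~ col x) hf
     (ex_intro _ bb (conj hb (WS _ (proj1 (andP hb))))).
  have [Wb0 cb0] := andP hb0.
  have Wc : W (b0 - dl).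
    apply: negbNE; apply/negP => nW; move: ((hcol b0).2 nW); by rewrite (negbTE cb0).
  have cc : col (b0 - dl) by move: (hcol1 b0 Wc); rewrite (negbTE cb0) => /esym/negbFE.
  have [ucS tcS ec uu] := hut (b0 - dl).
  have fc := WS _ Wc.
  have c0 : b0 - dl != g0.
    by move: Wc => /andP[_ /(lt_trans Hord hg01) /(lt_neq Hord)]; rewrite eq_sym.
  have c1 : b0 - dl != g1.
    by move: Wc => /andP[_ /(lt_neq Hord)]; rewrite eq_sym.
  have W0 : W g0 = false by rewrite /W (negbTE (lt_asym Hord hg01)) andbF.
  have W1 : W g1 = false by rewrite /W (negbTE (ltxx Hord g1)) andbF.
  apply: (soi_cons (q := fun x => if x == b0 - dl then uf (b0 - dl) else if W x && ~~ col x then f x else 0)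
                   (h := fun x => if x == b0 - dl then tf (b0 - dl) else if W x && ~~ col x then 0 else f x)).
  + by apply: pieceQ => //; last exact: uu.
  + apply: (soi_mono (n := 1)) => //; apply: soi_one.
    apply: (pieceI (W := W) (col := col) hf hg01 hsup hcol1) => //.
    * by move=> g; case: (_ == _) => //; case: (_ && _); rewrite ?S0.
    * move=> x; case: (eqVneq x (b0 - dl)) => [-> _|_]; first by split => // _.
      case/boolP: (W x && ~~ col x) => [_|hB]; first by rewrite eqxx.
      move=> fx; split => // Wx; apply: negbNE; apply/negP => cx; move: hB.
      by rewrite Wx cx.
    * by have := c0; rewrite eq_sym => /negbTE ->; rewrite W0.
    * by have := c1; rewrite eq_sym => /negbTE ->; rewrite W1.
  + move=> x; case: (eqVneq x (b0 - dl)) => [->|_]; first exact: ec.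
    by case: (W x && ~~ col x); rewrite ?addr0 ?add0r.
-
  pose W := fun x => (f x != 0) && (x != g0).
  have [col hcol] := @coloring G lt Hord W dl e hdl he (fun y Wy => hse y (proj1 (andP Wy))).
  have hcol1 : forall x, W (x - dl) -> col x = ~~ col (x - dl) := fun x => (hcol x).1.
  have WS : forall x, W x -> f x != 0 by move=> x /andP[].
  have W0 : W g0 = false by rewrite /W eqxx andbF.
  have cg1 : col g1 by apply: (hcol g1).2; rewrite /dl alg4 W0.
  case: (classic (exists b, W b && ~~ col b)) => [[bb hb]|nB]; last first.
    apply: (soi_mono (n := 2)) => //.
    apply: (L2 (W := W) (col := col) hf hg01 hsup hcol1) => //.
    move=> x fx; split => // Wx; apply: negbNE; apply/negP => cx; apply: nB.
    by exists x; rewrite Wx cx.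
  have [b0 [hb0 fb0 b0min]] := min_supp Hord (P := fun x => W x && ~~ col x) hf
     (ex_intro _ bb (conj hb (WS _ (proj1 (andP hb))))).
  have [Wb0 cb0] := andP hb0.
  have Wc : W (b0 - dl).
    apply: negbNE; apply/negP => nW; move: ((hcol b0).2 nW); by rewrite (negbTE cb0).
  have cc : col (b0 - dl) by move: (hcol1 b0 Wc); rewrite (negbTE cb0) => /esym/negbFE.
  have [ucS tcS ec uu] := hut (b0 - dl).
  have fc := WS _ Wc.
  have c0 : b0 - dl != g0 by case/andP: Wc.
  apply: (soi_cons (n := 2) (q := fun x => if x == b0 - dl then uf (b0 - dl) else if W x && ~~ col x then f x else 0)
                   (h := fun x => if x == b0 - dl then tf (b0 - dl) else if W x && ~~ col x then 0 else f x)).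
  + by apply: pieceQ => //; last exact: uu.
  + apply: (L2 (W := W) (col := col) hf hg01 hsup hcol1) => //.
    * by move=> g; case: (_ == _) => //; case: (_ && _); rewrite ?S0.
    * move=> x; case: (eqVneq x (b0 - dl)) => [-> _|_]; first by split => // _.
      case/boolP: (W x && ~~ col x) => [_|hB]; first by rewrite eqxx.
      move=> fx; split => // Wx; apply: negbNE; apply/negP => cx; move: hB.
      by rewrite Wx cx.
    * by have := c0; rewrite eq_sym => /negbTE ->; rewrite W0.
    * case: (eqVneq g1 (b0 - dl)) => [E|ne].
        by apply: (split_nonunit ec (uu fc)); rewrite -E.
      by rewrite cg1 andbF.
  + move=> x; case: (eqVneq x (b0 - dl)) => [->|_]; first exact: ec.
    by case: (W x && ~~ col x); rewrite ?addr0 ?add0r.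
Qed.
End Main.

Section Conv.
Variables (R : idomainType) (S : {pred R}) (G : zmodType) (lt : rel G).
Hypothesis HS : is_semidomain S.
Hypothesis Hred : add_reduced S.
Hypothesis Hfur : add_furstenberg S.
Hypothesis Hord : total_order_compat lt.

Lemma one_atom : add_atom S 1.
Proof.
have [a [aS a0 ha] [t tS e]] := Hfur (S1 HS) (oner_neq0 R).
have : a = a * a + a * t by rewrite -mulrDr -e mulr1.
case/(ha _ _ (SM HS aS aS) (SM HS aS tS)) => /eqP; first by rewrite mulf_eq0 orbb (negbTE a0).
rewrite mulf_eq0 (negbTE a0) /= => /eqP t0.
by move: e; rewrite t0 addr0 => ->.
Qed.

Lemma unit_atom a : sunit S a -> add_atom S a.
Proof.
move=> [aS [w wS aw]]; split => //; first by apply/eqP => a0; move: aw; rewrite a0 mul0r => /esym/eqP; rewrite oner_eq0.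
move=> b c bS cS e.
have [_ _ h1] := one_atom.
have w0 : w != 0 by apply/eqP => w0; move: aw; rewrite w0 mulr0 => /esym/eqP; rewrite oner_eq0.
have : 1 = b * w + c * w by rewrite -mulrDl -e aw.
case/(h1 _ _ (SM HS bS wS) (SM HS cS wS)) => /eqP; rewrite mulf_eq0 (negbTE w0) orbF => /eqP ->; by [left|right].
Qed.

Lemma sum_nth (l : seq (G -> R)) x : \sum_(p <- l) p x = \sum_(j < size l) (nth (fun _ => 0) l j) x.
Proof. by rewrite (big_nth (fun _ => 0)) big_mkord. Qed.

Lemma P3_P1 : (exists g : G, g != 0) ->
  (exists n : nat, (2 < n)%N /\ forall f : G -> R, in_series S lt f -> supp_gt1 f ->
                sum_of_irred_le S lt n f) ->
  forall a : R, a \in S -> (add_atom S a <-> sunit S a).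
Proof.
move=> hG [n [n2 Hn]] a aS; split; last exact: unit_atom.
move=> hat; have [_ a0 hat3] := hat.
apply: NNPP => nu.
have [d hd] := pos_exists Hord hG.
pose f := fun x : G => if [exists k : 'I_n.+1, x == d *+ k] then a else 0.
have hf : in_series S lt f.
  split; first by move=> g; rewrite /f; case: ifP => // _; exact: S0.
  exists (fun i => d *+ i); split; first exact: muln_lt.
  by move=> g; rewrite /f; case: ifP => [/existsP[k /eqP ->] _|_]; [exists k | rewrite eqxx].
have fk : forall k : 'I_n.+1, f (d *+ k) = a.
  by move=> k; rewrite /f; case: ifP => //; move/negbT/existsPn/(_ k); rewrite eqxx.
have hgt1 : supp_gt1 f.
  have k1 : (1 < n.+1)%N by rewrite ltnS (ltnW (ltnW n2)).
  exists (d *+ (Ordinal (ltn0Sn n) : nat)), (d *+ (Ordinal k1 : nat)); split; rewrite ?fk //=.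
  by rewrite mulr0n mulr1n (lt_neq Hord hd).
have [l [sl hl hs]] := Hn f hf hgt1.
pose P := fun j => nth (fun _ : G => 0 : R) l j.
have PS : forall (j : 'I_(size l)) x, P j x \in S.
  by move=> j x; case: (hl j (ltn_ord j)) => [[hS _] _ _ _]; apply: hS.
have hs' : forall x, f x = \sum_(j < size l) P j x by move=> x; rewrite hs sum_nth.
have val : forall (j : 'I_(size l)) x, P j x != 0 -> P j x = a /\ f x = a.
  move=> j x pjx.
  have fx : f x = a.
    case hx : [exists k : 'I_n.+1, x == d *+ k]; first by rewrite /f hx.
    exfalso; move/eqP: pjx; apply.
    have e0 : \sum_(i < size l) P i x = 0 by rewrite -hs' /f hx.
    exact: (sum_eq0_S HS Hred (fun i => PS i x) e0 (mem_index_enum j) erefl).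
  split => //.
  have := hs' x; rewrite fx (bigD1 j) //= => e.
  have rS : \sum_(i < size l | i != j) P i x \in S by apply: sum_S => // i; apply: PS.
  case: (hat3 _ _ (PS j x) rS e) => [/eqP|r0]; first by rewrite (negbTE pjx).
  by rewrite e r0 addr0.
have single : forall (j : 'I_(size l)) x y, P j x != 0 -> P j y != 0 -> x = y.
  move=> j x y px py; apply: NNPP => nxy.
  have [[hPS [eP [heP hsP]]] Pnz Pnu Pirr] := hl j (ltn_ord j).
  pose A := fun z : G => if z == 0 then a else 0.
  pose I := fun z : G => if P j z != 0 then 1 else 0 : R.
  have hA : in_series S lt A.
    split; first by move=> g; rewrite /A; case: ifP => // _; exact: S0.
    exists (fun i => d *+ i); split; first exact: muln_lt.
    by move=> g; rewrite /A; case: ifP => [/eqP -> _|_]; [exists 0%N | rewrite eqxx].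
  have hI : in_series S lt I.
    apply: (in_series_sub (f := P j)); first by split => //; exists eP.
      by move=> g; rewrite /I; case: ifP => _; [exact: S1 HS | exact: S0].
    by move=> g; rewrite /I; case: ifP => // _; rewrite eqxx.
  have hAI : series_mul A I (P j).
    move=> z; exists [:: 0]; split => //.
      by move=> b; rewrite /A; case: ifP => [/eqP -> _ _|_]; [rewrite inE | rewrite eqxx].
    rewrite big_seq1 /A eqxx subr0 /I; case: ifP => [pz|/negbFE/eqP ->]; last by rewrite mulr0.
    by rewrite mulr1; case: (val j z pz).
  case: (Pirr A I hA hI hAI) => [[_ [v [hv hm]]]|hu].
    apply: nu; have [s [us hsv e1]] := hm 0.
    have : (series_one R (0 : G)) = a * v 0.
      rewrite e1 (sum_single (j := 0)) //.
        by rewrite /A eqxx sub0r oppr0.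
      - by move=> i _ i0; rewrite /A (negbTE i0) mul0r.
      - by rewrite mulf_eq0 negb_or => /andP[h1 h2]; exact: hsv h1 h2.
    rewrite /series_one eqxx => e2; split => //; exists (v 0) => //.
    by case: hv => [hvS _]; apply: hvS.
  apply: nxy; apply: (unit_single HS Hred hI hu); by rewrite /I ?px ?py oner_neq0.
(* pigeonhole *)
have ex : forall k : 'I_n.+1, exists j : 'I_(size l), P j (d *+ k) != 0.
  move=> k; apply: NNPP => N; move/eqP: a0; apply.
  rewrite -(fk k) hs'; apply: big1 => j _; apply/eqP; apply: negbNE; apply/negP => h.
  by apply: N; exists j.
have [phi hphi] := choice_fun ex.
have inj : injective phi.
  move=> k1 k2 e12; have := single _ _ _ (hphi k1) (ltac:(rewrite e12; exact: hphi k2)).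
  move=> e; apply/val_inj/eqP; rewrite eqn_leq; apply/andP; split; rewrite leqNgt; apply/negP => h.
    by move: (lt_neq Hord (mono_lt Hord (muln_lt Hord hd) h)); rewrite e eqxx.
  by move: (lt_neq Hord (mono_lt Hord (muln_lt Hord hd) h)); rewrite e eqxx.
have := leq_card _ inj; rewrite !card_ord => h.
by move: (leq_trans h sl); rewrite ltnn.
Qed.
End Conv.

Unset Implicit Arguments.

Theorem corollary4p7 (R : idomainType) (S : {pred R}) (G : zmodType) (lt : rel G) :
  is_semidomain S -> add_reduced S -> add_furstenberg S ->
  total_order_compat lt -> torsion_free G -> fin_gen G ->
  (exists g : G, g != 0) ->
  let P1 := forall a : R, a \in S -> (add_atom S a <-> sunit S a) in
  let P2 := forall f : G -> R, in_series S lt f -> supp_gt1 f ->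
              sum_of_irred_le S lt 3 f in
  let P3 := exists n : nat, (2 < n)%N /\
              forall f : G -> R, in_series S lt f -> supp_gt1 f ->
                sum_of_irred_le S lt n f in
  (P1 <-> P2) /\ (P2 <-> P3).
Proof.
move=> HS Hred Hfur Hord _ _ hG P1 P2 P3.
have [d hd] := pos_exists Hord hG.
have h12 : P1 -> P2 := fun H f hf h2 => main_P2 HS Hred Hfur Hord H hd hf h2.
have h23 : P2 -> P3 := fun H => ex_intro _ 3%N (conj (erefl true) H).
have h31 : P3 -> P1 := P3_P1 HS Hred Hfur Hord hG.
by split; split; auto.
Qed.
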